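(* The following two statements are equivalent: (1) For every non-empty set $\mathbb{A}$ and every finite coloring $\varphi:\mathbb{A}^+\to C$, every periodic word $x=u^\omega$ ($u\in\mathbb{A}^+$) admits a $\varphi$-ultra monochromatic factorization. (2) (Hindman's Finite Sums Theorem) For every finite coloring $\varphi:\mathbb{N}^+\to C$ of the positive integers there exist $c\in C$ and an infinite sequence $(n_k)_{k\ge0}$ of positive integers such that $\mathrm{FS}((n_k)_{k\ge0})=\{\sum_{i\in F}n_i : F \text{ a non-empty finite subset of } \mathbb{N}\}\subseteq\varphi^{-1}(c)$.
   Context: $\mathbb{A}^+$ is the free semigroup of non-empty finite words over $\mathbb{A}$; $u^\omega=uuu\cdots$. A finite coloring is a map into a finite non-empty set $C$. $\mathbb{N}^+=\{1,2,\dots\}$. A factorization $x=V_0V_1V_2\cdots$ with all $V_i\in\mathbb{A}^+$ is $\varphi$-ultra monochromatic if there is $c\in C$ such that for all $k\ge1$, all $0\le n_1<\cdots<n_k$ and all permutations $\sigma$ of $\{1,\dots,k\}$, $\varphi(V_{n_{\sigma(1)}}\cdots V_{n_{\sigma(k)}})=c$. *)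

(* Defs.v *)
From mathcomp Require Import all_boot.
Set Implicit Arguments. Unset Strict Implicit. Unset Printing Implicit Defensive.

(* The periodic word u^omega for the non-empty word u = a :: w. *)
Definition omega_word (A : Type) (a : A) (w : seq A) : nat -> A :=
  fun k => nth a (a :: w) (k %% size (a :: w)).

(* x = V_0 V_1 V_2 ... with every V_i non-empty: every finite prefix
   V_0 ... V_(n-1) of the factorization is a prefix of x. *)
Definition is_factorization (A : Type) (x : nat -> A) (V : nat -> seq A) : Prop :=
  (forall i, V i <> [::]) /\
  (forall n k, k < size (flatten (map V (iota 0 n))) ->
     x k = nth (x 0) (flatten (map V (iota 0 n))) k).

(* Ultra monochromatic: one colour c for every product V_{n_sigma(1)}...V_{n_sigma(k)}
   with k >= 1, n_1 < ... < n_k, sigma a permutation.  The strictly increasing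
   tuple (n_1,...,n_k) is a non-empty ltn-sorted list s, and its permuted
   rearrangements are the lists t with perm_eq t s. *)
Definition ultra_monochromatic (A : Type) (C : Type) (phi : seq A -> C)
  (V : nat -> seq A) : Prop :=
  exists c : C, forall s : seq nat, s <> [::] -> sorted ltn s ->
    forall t : seq nat, perm_eq t s -> phi (flatten (map V t)) = c.

(* Statement (1).  A colouring of A^+ is modelled as phi : seq A -> C; its
   value on the empty word is never used. *)
Definition Stmt1 : Prop :=
  forall (A : Type), inhabited A ->
  forall (C : finType) (phi : seq A -> C) (a : A) (w : seq A),
  exists V : nat -> seq A,
    is_factorization (omega_word a w) V /\ ultra_monochromatic phi V.

(* Statement (2): Hindman's finite sums theorem.  A colouring of N^+ is modelled
   as phi : nat -> C (value at 0 never used); non-empty finite subsets F of N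
   are non-empty duplicate-free lists. *)
Definition Stmt2 : Prop :=
  forall (C : finType) (phi : nat -> C),
  exists (c : C) (n : nat -> nat),
    (forall k, 0 < n k) /\
    (forall F : seq nat, F <> [::] -> uniq F -> phi (\sum_(i <- F) n i) = c).

(* Main.v *)
Require Import Defs.
From mathcomp Require Import all_boot.

Section Aux.
Variables (A : Type) (a : A) (w : seq A).
Definition pw (m : nat) : seq A := flatten (nseq m (a :: w)).

Lemma pwD m k : pw (m + k) = pw m ++ pw k.
Proof. by rewrite /pw nseqD flatten_cat. Qed.

Lemma pw_sum (n : nat -> nat) (t : seq nat) :
  flatten (map (fun i => pw (n i)) t) = pw (\sum_(i <- t) n i).
Proof.
elim: t => [|x t IH]; first by rewrite big_nil.
by rewrite big_cons /= IH pwD.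
Qed.

Lemma pw_prefix N k : k < size (pw N) ->
  omega_word a w k = nth (omega_word a w 0) (pw N) k.
Proof.
elim: N k => [|N IH] k //=.
have -> : pw (N.+1) = (a :: w) ++ pw N by [].
rewrite nth_cat size_cat => Hk.
have [Hku|Hle] := ltnP k (size (a :: w)) => [|].
  by rewrite {1}/omega_word modn_small //; apply: set_nth_default.

rewrite -IH; last by rewrite ltn_subLR // addnC.
rewrite /omega_word.
by rewrite -{1}(subnK Hle) modnDr.
Qed.
End Aux.

Lemma size_flat_map (A : Type) (V : nat -> seq A) (F : seq nat) :
  size (flatten (map V F)) = \sum_(i <- F) size (V i).
Proof.
elim: F => [|x F IH]; first by rewrite big_nil.
by rewrite big_cons /= size_cat IH.
Qed.

Theorem theorem2p6 : Stmt1 <-> Stmt2.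
Proof.
split.
- move=> H1 C phi2.
  have [V [[HV _] [c Hc]]] := H1 unit (inhabits tt) C (fun s => phi2 (size s)) tt [::].
  exists c, (fun k => size (V k)); split.
    by move=> k; rewrite lt0n size_eq0; apply/eqP/HV.
  move=> F HF Fu.
  rewrite -size_flat_map.
  apply: (Hc (sort leq F)).
  + move=> E; apply: HF; apply/eqP; rewrite -size_eq0 -(size_sort leq) E //.
  + by rewrite ltn_sorted_uniq_leq sort_uniq Fu sort_sorted //; exact: leq_total.
  + by rewrite perm_sym perm_sort.
- move=> H2 A _ C phi a w.
  have [c [n [Hn Hc]]] := H2 C (fun m => phi (@pw A a w m)).
  exists (fun i => @pw A a w (n i)); split; first split.
  + move=> i; by rewrite -(prednK (Hn i)).
  + move=> N k; rewrite pw_sum; exact: pw_prefix.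
  + exists c => s Hs Ss t Pts.
    rewrite pw_sum; apply: Hc.
    * move=> E; apply: Hs; apply/eqP; rewrite -size_eq0 -(perm_size Pts) E //.
    * rewrite (perm_uniq Pts); apply: (sorted_uniq ltn_trans ltnn Ss).
Qed.
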